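(* Let $\mathcal{D}=\{(X_i,B_i):i\in I\}$ be a collection of random variable/nonempty event pairs with coherent$_1$ conditional previsions $\{P(X_i\mid B_i):i\in I\}$, and let $X$ be a random variable on $\Omega$. Then there exist extended real numbers $a\le b$ such that, for an extended real number $p$, the previsions in $\mathcal{D}$ together with $P(X\mid\Omega)=p$ are coherent$_1$ if and only if $p\in[a,b]$ (the closed interval in the extended reals).
   Context: Let $\Omega$ be a nonempty set of states $\omega$; events are subsets of $\Omega$ and random variables are real-valued functions on $\Omega$. An event $B$ is identified with its indicator function. A conditional prevision $P(X\mid B)$ is an extended real number. Coherence$_1$: a collection $\{P(X_i\mid B_i):i\in I\}$ is coherent$_1$ if for every finite $\{i_1,\dots,i_n\}\subseteq I$, all real $\alpha_1,\dots,\alpha_n$ with $\alpha_j\ge 0$ whenever $P(X_{i_j}\mid B_{i_j})=+\infty$ and $\alpha_j\le 0$ whenever $P(X_{i_j}\mid B_{i_j})=-\infty$, and all real $c_1,\dots,c_n$ with $c_j=P(X_{i_j}\mid B_{i_j})$ whenever that prevision is finite, we have $\sup_\omega \sum_{j=1}^n \alpha_j B_{i_j}(\omega)[X_{i_j}(\omega)-c_j]\ge 0$. *)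

(* Defs.v *)
From HB Require Import structures.
From mathcomp Require Import all_boot all_order all_algebra.
From mathcomp Require Import all_classical all_reals ereal numfun.
Set Implicit Arguments. Unset Strict Implicit. Unset Printing Implicit Defensive.
Import Order.TTheory GRing.Theory Num.Theory.
Local Open Scope classical_set_scope.
Local Open Scope ring_scope.

(* A finite subfamily {i_1,...,i_n} of
   distinct indices is given by an injective map idx : 'I_n -> I. *)
Definition coherent1 (R : realType) (Omega : Type) (I : Type)
  (X : I -> Omega -> R) (B : I -> set Omega) (P : I -> \bar R) : Prop :=
  forall (n : nat) (idx : 'I_n -> I), injective idx ->
  forall (alpha c : 'I_n -> R),
    (forall j, P (idx j) = +oo%E -> 0 <= alpha j) ->
    (forall j, P (idx j) = -oo%E -> alpha j <= 0) ->
    (forall j (r : R), P (idx j) = r%:E -> c j = r) ->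
    (0 <= ereal_sup (range (fun w : Omega =>
        (\sum_(j < n) alpha j * \1_(B (idx j)) w * (X (idx j) w - c j))%:E)))%E.

(* The family D extended by the pair (Y, Omega) with prevision p,
   indexed by option I (None is the new pair). *)
Definition extX (R : realType) (Omega I : Type) (X : I -> Omega -> R)
  (Y : Omega -> R) : option I -> Omega -> R :=
  fun o => match o with Some i => X i | None => Y end.
Definition extB (Omega I : Type) (B : I -> set Omega) : option I -> set Omega :=
  fun o => match o with Some i => B i | None => setT end.
Definition extP (R : realType) (I : Type) (P : I -> \bar R) (p : \bar R)
  : option I -> \bar R :=
  fun o => match o with Some i => P i | None => p end.

(* Main.v *)
Require Import Defs.
From HB Require Import structures.
From mathcomp Require Import all_boot all_order all_algebra.
From mathcomp Require Import all_classical all_reals ereal numfun.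
From mathcomp Require Import ring lra.
Import Order.TTheory GRing.Theory Num.Theory.
Local Open Scope classical_set_scope.
Local Open Scope ring_scope.

Set Implicit Arguments. Unset Strict Implicit.

Definition nnsup (R : realType) (Omega : Type) (f : Omega -> R) : Prop :=
  (0 <= ereal_sup (range (fun w => (f w)%:E)))%E.

Lemma SupE (R : realType) (Omega : Type) (h : Omega -> R) (x : R) :
  (x%:E <= ereal_sup (range (fun w => (h w)%:E)))%E <->
  (forall e, 0 < e -> exists w, x - e < h w).
Proof.
split.
- move=> H e e0.
  have : ((x - e)%:E < ereal_sup (range (fun w => (h w)%:E)))%E.
    by apply: lt_le_trans H; rewrite lte_fin ltrBlDr ltrDl.
  by move=> /ereal_sup_gt [_ [w _ <-]]; rewrite lte_fin => ?; exists w.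
- move=> H; apply/lee_addgt0Pr => e e0.
  have [w Hw] := H e e0.
  apply: (@le_trans _ _ ((h w)%:E + e%:E)%E).
    by rewrite -EFinD lee_fin -lerBlDr ltW.
  apply: leeD2r; apply: ereal_sup_ubound; by exists w.
Qed.

Lemma nnsupE (R : realType) (Omega : Type) (h : Omega -> R) :
  nnsup h <-> (forall e, 0 < e -> exists w, - e < h w).
Proof.
rewrite /nnsup; have := SupE h 0; rewrite /= => ->.
by split=> H e e0; have [w Hw] := H e e0; exists w; move: Hw; rewrite sub0r.
Qed.

Lemma sum0_seq (R : realType) (A : eqType) (s : seq A) (F : A -> R) :
  (forall t, t \in s -> 0 <= F t) -> \sum_(t <- s) F t = 0 ->
  forall t, t \in s -> F t = 0.
Proof.
elim: s => [|a s IH] H; first by [].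
rewrite big_cons => /eqP; rewrite paddr_eq0 ?H ?mem_head //; last first.
  by rewrite big_seq; apply: sumr_ge0 => t ts; apply: H; rewrite inE ts orbT.
move=> /andP[/eqP Fa /eqP Fs] t; rewrite inE => /orP[/eqP ->//|ts].
by apply: IH => // u us; apply: H; rewrite inE us orbT.
Qed.

Lemma sum_pred1_seq (R : realType) (A : eqType) (u : seq A) x (F : A -> R) :
  uniq u -> x \in u -> \sum_(i <- u | x == i) F i = F x.
Proof.
elim: u => // a u IH /= /andP[au uu]; rewrite inE big_cons => /orP[/eqP ->|xu].
  rewrite eqxx big1_seq ?addr0 // => i /andP[/eqP ai iu].
  by move: au; rewrite ai iu.
have xa : (x == a) = false by apply/negP => /eqP xa; move: au; rewrite -xa xu.
by rewrite xa IH.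
Qed.

Section Gen.
Variables (R : realType) (Omega : Type) (T : eqType)
  (X : T -> Omega -> R) (B : T -> set Omega) (P : T -> \bar R).

Definition term (t : T * R * R) (w : Omega) : R :=
  t.1.2 * \1_(B t.1.1) w * (X t.1.1 w - t.2).
Definition vall (s : seq (T * R * R)) (w : Omega) : R := \sum_(t <- s) term t w.
Definition admt (t : T * R * R) : Prop :=
  [/\ P t.1.1 = +oo%E -> 0 <= t.1.2, P t.1.1 = -oo%E -> t.1.2 <= 0 &
      forall r, P t.1.1 = r%:E -> t.2 = r].
Definition adml (s : seq (T * R * R)) : Prop := forall t, t \in s -> admt t.

Lemma coh_list : coherent1 X B P -> forall s, adml s -> nnsup (vall s).
Proof.
move=> H s As.
case: s As => [|t0 s'] As.
  have idx0 : 'I_0 -> T by case=> m; rewrite ltn0.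
  have inj0 : injective idx0 by case.
  have := H 0 idx0 inj0 (fun _ => 0) (fun _ => 0).
  have Hf : (fun w : Omega => (\sum_(j < 0) (fun _ => 0) j * \1_(B (idx0 j)) w *
      (X (idx0 j) w - (fun _ => 0) j))%:E) = (fun w => (vall [::] w)%:E).
    by apply/funext => w; rewrite big_ord0 /vall big_nil.
  by rewrite Hf; apply; case.
set s := t0 :: s'.
pose u := undup [seq t.1.1 | t <- s].
pose Aj i := \sum_(t <- s | t.1.1 == i) t.1.2.
pose Cj i := \sum_(t <- s | t.1.1 == i) t.1.2 * t.2.
pose cm i := if P i is r%:E then r else (if Aj i == 0 then 0 else Cj i / Aj i).
have allz : forall (F : T * R * R -> R) i,
    (forall t, t \in s -> t.1.1 == i -> 0 <= F t) ->
    \sum_(t <- s | t.1.1 == i) F t = 0 ->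
    forall t, t \in s -> t.1.1 == i -> F t = 0.
  move=> F i pos S0 t ts ti.
  have z := @sum0_seq R _ s (fun t => if t.1.1 == i then F t else 0).
  have := z _ _ t ts; rewrite ti; apply.
  - by move=> u0 us; case: ifP => // ui; apply: pos.
  - by rewrite -big_mkcond.
have Cz : forall i, (forall t, t \in s -> t.1.1 == i -> t.1.2 = 0) -> Cj i = 0.
  move=> i z; rewrite /Cj big_seq_cond; apply: big1 => t /andP[ts ti].
  by rewrite z // mul0r.
have key : forall i, Aj i * cm i = Cj i.
  move=> i; rewrite /cm; case Pi: (P i) => [r| |].
  - rewrite /Aj /Cj mulr_suml [RHS]big_seq_cond [LHS]big_seq_cond.
    apply: eq_bigr => t /andP[ts /eqP ti].
    by have [_ _ h] := As t ts; rewrite (h r) // ti.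
  - case: eqP => [A0|/eqP A0]; last by rewrite mulrC divfK.
    rewrite mulr0 Cz //; apply: (allz (fun t => t.1.2)) => // t ts /eqP ti.
    by have [h _ _] := As t ts; apply: h; rewrite ti.
  - case: eqP => [A0|/eqP A0]; last by rewrite mulrC divfK.
    rewrite mulr0 Cz // => t ts ti; apply/eqP; rewrite -oppr_eq0; apply/eqP.
    apply: (allz (fun t => - t.1.2)) => //.
    + move=> t' ts' /eqP ti'; have [_ h _] := As t' ts'.
      by rewrite oppr_ge0; apply: h; rewrite ti' (eqP ti).
    + by rewrite sumrN (eqP ti) -/(Aj i) A0 oppr0.
pose i0 := t0.1.1.
pose n := size u.
pose idx (j : 'I_n) := nth i0 u j.
have inj : injective idx.
  move=> j k /eqP; rewrite /idx nth_uniq ?undup_uniq // => /eqP; exact: val_inj.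
have := H n idx inj (fun j => Aj (idx j)) (fun j => cm (idx j)).
have E1 : forall F : T -> R, \sum_(j < n) F (idx j) = \sum_(i <- u) F i.
  by move=> F; rewrite (big_nth i0) big_mkord.
have Hf : (fun w => (\sum_(j < n) (fun j => Aj (idx j)) j * \1_(B (idx j)) w *
    (X (idx j) w - (fun j => cm (idx j)) j))%:E) = fun w => (vall s w)%:E.
  apply/funext => w; congr (_%:E).
  rewrite (E1 (fun i => Aj i * \1_(B i) w * (X i w - cm i))).
  have E2 : forall i, Aj i * \1_(B i) w * (X i w - cm i) =
      \sum_(t <- s | t.1.1 == i) term t w.
    move=> i; have k := key i.
    transitivity (Aj i * \1_(B i) w * X i w - \1_(B i) w * Cj i).
      by rewrite -k; ring.
    rewrite /Aj /Cj !mulr_suml mulr_sumr -sumrB; apply: eq_bigr => t /eqP ti.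
    by rewrite /term ti; ring.
  under eq_bigr do rewrite E2.
  under eq_bigr do rewrite big_mkcond.
  rewrite exchange_big /= /vall [RHS]big_seq [LHS]big_seq; apply: eq_bigr => t ts.
  rewrite -big_mkcond /= sum_pred1_seq ?undup_uniq //.
  by rewrite mem_undup; apply/mapP; exists t.
rewrite Hf; apply.
- move=> j Pj; rewrite /Aj big_seq_cond sumr_ge0 // => t /andP[ts /eqP ti].
  by have [h _ _] := As t ts; apply: h; rewrite ti.
- move=> j Pj; rewrite /Aj big_seq_cond sumr_le0 // => t /andP[ts /eqP ti].
  by have [_ h _] := As t ts; apply: h; rewrite ti.
- by move=> j r Pj; rewrite /cm Pj.
Qed.
End Gen.

Lemma nnsup_eq (R : realType) (Omega : Type) (f h : Omega -> R) :
  f =1 h -> nnsup f -> nnsup h.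
Proof. by move=> e; rewrite /nnsup (funext e). Qed.

Definition mcm (R : realType) (q : \bar R) (A C : R) : R :=
  if q is r%:E then r else if A == 0 then 0 else C / A.

Lemma merge_key (R : realType) (q : \bar R) (L : seq (R * R)) :
  (forall x, x \in L -> [/\ q = +oo%E -> 0 <= x.1, q = -oo%E -> x.1 <= 0 &
      forall r, q = r%:E -> x.2 = r]) ->
  (\sum_(x <- L) x.1) * mcm q (\sum_(x <- L) x.1) (\sum_(x <- L) x.1 * x.2)
  = \sum_(x <- L) x.1 * x.2.
Proof.
move=> H; rewrite /mcm; case: q H => [r| |] H.
- rewrite mulr_suml [RHS]big_seq [LHS]big_seq; apply: eq_bigr => x xL.
  by have [_ _ h] := H x xL; rewrite (h r).
- case: eqP => [A0|/eqP A0]; last by rewrite mulrC divfK.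
  rewrite mulr0 big_seq big1 // => x xL.
  rewrite (@sum0_seq R _ L (fun x => x.1)) ?mul0r //.
  by move=> y yL; have [h _ _] := H y yL; exact: h.
- case: eqP => [A0|/eqP A0]; last by rewrite mulrC divfK.
  rewrite mulr0 big_seq big1 // => x xL.
  have : - x.1 = 0.
    apply: (@sum0_seq R _ L (fun x => - x.1)) => //.
      by move=> y yL; have [_ h _] := H y yL; rewrite oppr_ge0; exact: h.
    by rewrite sumrN A0 oppr0.
  by move/eqP; rewrite oppr_eq0 => /eqP ->; rewrite mul0r.
Qed.

Section Main.
Variables (R : realType) (Omega : Type) (I : eqType)
  (X : I -> Omega -> R) (B : I -> set Omega) (P : I -> \bar R).

Definition bnd (Z : Omega -> R) : \bar R :=
  ereal_inf [set ereal_sup (range (fun w => (vall X B s w + Z w)%:E)) |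
             s in [set s | adml P s]].

Definition liftS (s : seq (I * R * R)) : seq (option I * R * R) :=
  map (fun t => (Some t.1.1, t.1.2, t.2)) s.

Lemma KL (Y : Omega -> R) (p : \bar R) s a c :
  coherent1 (extX X Y) (extB B) (extP P p) -> adml P s ->
  admt (extP P p) (None, a, c) ->
  nnsup (fun w => vall X B s w + a * (Y w - c)).
Proof.
move=> H As Ht.
have := coh_list H (s := liftS s ++ [:: (None, a, c)]).
have Hf : vall (extX X Y) (extB B) (liftS s ++ [:: (None, a, c)]) =1
    (fun w => vall X B s w + a * (Y w - c)).
  move=> w; rewrite /vall big_cat big_map big_seq1 /term /= indicT /=.
  by rewrite mulr1.
move=> h; apply: (nnsup_eq Hf); apply: h => t; rewrite mem_cat => /orP[|].
  by move=> /mapP[t' t's ->]; have [h1 h2 h3] := As t' t's; split.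
by rewrite inE => /eqP ->.
Qed.

Lemma UB (Y : Omega -> R) (p : \bar R) :
  coherent1 (extX X Y) (extB B) (extP P p) -> (p <= bnd Y)%E.
Proof.
move=> H; apply: le_ereal_inf_tmp => _ [s As <-].
have gen : forall r, admt (extP P p) (None, 1, r) ->
    (r%:E <= ereal_sup (range (fun w => (vall X B s w + Y w)%:E)))%E.
  move=> r Ha; have /nnsupE h := KL H As Ha.
  apply/SupE => e e0; have [w Hw] := h e e0; exists w.
  by move: Hw; rewrite mul1r; lra.
case: p H gen => [r| |] H gen.
- by apply: gen; split => // r' [->].
- have HM : forall M : R,
      (M%:E <= ereal_sup (range (fun w => (vall X B s w + Y w)%:E)))%E.
    by move=> M; apply: gen; split => // _; exact: ler01.
  move: (ereal_sup _) HM => F HM; case: F HM => [x| |] HM //.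
  + by have := HM (x + 1); rewrite lee_fin => hh; exfalso; lra.
  + by have := HM 0.
- exact: leNye.
Qed.

Lemma LB (Y : Omega -> R) (p : \bar R) :
  coherent1 (extX X Y) (extB B) (extP P p) -> (- p <= bnd (fun w => (- Y w)%R))%E.
Proof.
move=> H; apply: le_ereal_inf_tmp => _ [s As <-].
have gen : forall r, admt (extP P p) (None, -1, - r) ->
    (r%:E <= ereal_sup (range (fun w => (vall X B s w + - Y w)%:E)))%E.
  move=> r Ha; have /nnsupE h := KL H As Ha.
  apply/SupE => e e0; have [w Hw] := h e e0; exists w.
  by move: Hw; rewrite mulN1r; lra.
case: p H gen => [r| |] H gen.
- by rewrite -EFinN; apply: gen; split => // r' [->]; rewrite opprK.
- exact: leNye.
- have HM : forall M : R,
      (M%:E <= ereal_sup (range (fun w => (vall X B s w + - Y w)%:E)))%E.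
    by move=> M; apply: gen; split => // _; rewrite lerN10.
  move: (ereal_sup _) HM => F HM; case: F HM => [x| |] HM //.
  + by have := HM (x + 1); rewrite lee_fin => hh; exfalso; lra.
  + by have := HM 0.
Qed.

Lemma CL (Z : Omega -> R) (r A : R) s :
  (r%:E <= bnd Z)%E -> adml P s -> 0 < A ->
  nnsup (fun w => vall X B s w + A * (Z w - r)).
Proof.
move=> rb As A0.
pose s' := map (fun t => (t.1.1, t.1.2 / A, t.2)) s.
have ia0 : 0 < A^-1 by rewrite invr_gt0.
have As' : adml P s'.
  move=> t /mapP[t' ts' ->]; have [h1 h2 h3] := As t' ts'.
  split => /=.
  - by move/h1 => h; nra.
  - by move/h2 => h; nra.
  - exact: h3.
have g' : forall w, vall X B s' w = vall X B s w / A.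
  move=> w; rewrite /vall big_map mulr_suml; apply: eq_bigr => t _.
  by rewrite /term /=; field; exact: lt0r_neq0.
have : (bnd Z <= ereal_sup (range (fun w => (vall X B s' w + Z w)%:E)))%E.
  by apply: ereal_inf_lbound; exists s'.
move=> /(le_trans rb) /SupE h; apply/nnsupE => e e0.
have [w Hw] := h (e / A) (divr_gt0 e0 A0); exists w.
move: Hw; rewrite g' => Hw.
have : A * (r - e / A) < A * (vall X B s w / A + Z w) by rewrite ltr_pM2l.
have e1 : A * (r - e / A) = A * r - e by field; exact: lt0r_neq0.
have e2 : A * (vall X B s w / A + Z w) = vall X B s w + A * Z w
  by field; exact: lt0r_neq0.
rewrite e1 e2; lra.
Qed.

Definition sI (s : seq (option I * R * R)) : seq (I * R * R) :=
  pmap (fun t : option I * R * R =>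
    if t.1.1 is Some i then Some (i, t.1.2, t.2) else None) s.

Lemma split_val (Y : Omega -> R) s w :
  vall (extX X Y) (extB B) s w = vall X B (sI s) w +
    \sum_(t <- s | t.1.1 == None) t.1.2 * (Y w - t.2).
Proof.
rewrite /vall; elim: s => [|[[o a] c] s IH]; first by rewrite !big_nil addr0.
rewrite big_cons [in RHS]big_cons IH; case: o => [i|] /=.
  by rewrite big_cons /term /=; ring.
by rewrite /term /= indicT /= mulr1; ring.
Qed.

Lemma adml_sI (p : \bar R) s : adml (extP P p) s -> adml P (sI s).
Proof.
move=> As t; rewrite mem_pmap => /mapP[[[o a] c] ts].
case: o ts => [i|] ts //= [->].
by have [h1 h2 h3] := As _ ts; split.
Qed.

Theorem mainI (Y : Omega -> R) : coherent1 X B P ->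
  exists a b : \bar R, (a <= b)%E /\
    forall p : \bar R,
      coherent1 (extX X Y) (extB B) (extP P p) <-> (a <= p <= b)%E.
Proof.
move=> H; exists (- bnd (fun w => (- Y w)%R))%E, (bnd Y); split.
  rewrite leeNl; apply: le_ereal_inf_tmp => _ [s2 As2 <-].
  rewrite leeNl; apply: le_ereal_inf_tmp => _ [s1 As1 <-].
  have As12 : adml P (s1 ++ s2).
    by move=> t; rewrite mem_cat => /orP[/As1|/As2].
  have /nnsupE nn := coh_list H As12.
  have ub1 : forall w, ((vall X B s1 w + Y w)%:E <=
      ereal_sup (range (fun w => (vall X B s1 w + Y w)%:E)))%E.
    by move=> w; apply: ereal_sup_ubound; exists w.
  have ub2 : forall w, ((vall X B s2 w + - Y w)%:E <=
      ereal_sup (range (fun w => (vall X B s2 w + - Y w)%:E)))%E.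
    by move=> w; apply: ereal_sup_ubound; exists w.
  have [w0 _] := nn 1 ltr01.
  move: (ereal_sup (range (fun w => (vall X B s1 w + Y w)%:E))) ub1 => F1 ub1.
  move: (ereal_sup (range (fun w => (vall X B s2 w + - Y w)%:E))) ub2 => F2 ub2.
  case: F1 ub1 => [x1| |] ub1; case: F2 ub2 => [x2| |] ub2 //=;
    try (by have := ub1 w0); try (by have := ub2 w0);
    try exact: leNye; try exact: leey.
  rewrite lee_fin; case: (lerP (- x2) x1) => // h.
  have [w Hw] := nn (- (x1 + x2)) ltac:(lra).
  have := ub1 w; have := ub2 w; rewrite !lee_fin => a1 b1.
  have vc : vall X B (s1 ++ s2) w = vall X B s1 w + vall X B s2 w.
    by rewrite /vall big_cat.
  exfalso; move: Hw; rewrite vc; lra.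
move=> p; split.
  by move=> Hc; rewrite leeNl LB // UB.
move=> /andP[ap pb] n idx inj al c h1 h2 h3.
pose s := [seq (idx j, al j, c j) | j <- index_enum 'I_n].
have As : adml (extP P p) s.
  by move=> t /mapP[j _ ->]; split => /=; [exact: h1|exact: h2|exact: h3].
pose L := [seq (t.1.2, t.2) | t <- s & t.1.1 == None].
pose A := \sum_(x <- L) x.1.
pose C := \sum_(x <- L) x.1 * x.2.
pose rr := mcm p A C.
have AL : forall x, x \in L -> [/\ p = +oo%E -> 0 <= x.1, p = -oo%E -> x.1 <= 0 &
      forall r, p = r%:E -> x.2 = r].
  move=> x /mapP[t]; rewrite mem_filter => /andP[/eqP tN ts] ->.
  by have := As t ts; rewrite /admt tN.
have key : A * rr = C by apply: merge_key.
have Nv : forall w, \sum_(t <- s | t.1.1 == None) t.1.2 * (Y w - t.2) =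
    A * (Y w - rr).
  move=> w; rewrite mulrBr key /A /C mulr_suml -sumrB /L [RHS]big_map [RHS]big_filter.
  by apply: eq_bigr => t _ /=; rewrite mulrBr.
have Hf : (fun w => vall (extX X Y) (extB B) s w) =1
    (fun w => vall X B (sI s) w + A * (Y w - rr)).
  by move=> w; rewrite split_val Nv.
have Hs : (fun w => \sum_(j < n) al j * \1_(extB B (idx j)) w *
    (extX X Y (idx j) w - c j)) =1 (fun w => vall (extX X Y) (extB B) s w).
  by move=> w; rewrite /vall big_map.
have AsI := adml_sI As.
apply: (nnsup_eq (fun w => esym (etrans (Hs w) (Hf w)))).
have [A0|A0|A0] := ltgtP A 0.
- have Ab : ((- rr)%:E <= bnd (fun w => (- Y w)%R))%E.
    move: ap; rewrite leeNl /rr /mcm; case E: p AL => [r| |] AL //.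
    + move=> _; have hA : 0 <= A.
        by rewrite /A big_seq sumr_ge0 // => x xL; have [h _ _] := AL x xL; apply: h.
      by move: hA; rewrite leNgt A0.
    + by rewrite /= leye_eq => /eqP ->; exact: leey.
  have hA : 0 < - A by rewrite oppr_gt0.
  have h := CL Ab AsI hA.
  apply: (nnsup_eq _ h).
  by move=> w /=; ring.
- have Ab : (rr%:E <= bnd Y)%E.
    move: pb; rewrite /rr /mcm; case E: p AL => [r| |] AL //.
    + by rewrite leye_eq => /eqP ->; exact: leey.
    + move=> _; have hA : A <= 0.
        by rewrite /A big_seq sumr_le0 // => x xL; have [_ h _] := AL x xL; apply: h.
      by move: hA; rewrite leNgt A0.
  exact: CL Ab AsI A0.
- apply: (nnsup_eq _ (coh_list H AsI)) => w /=; rewrite A0; ring.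
Qed.
End Main.

Theorem lemma7p1 (R : realType) (Omega : Type) (I : Type)
  (X : I -> Omega -> R) (B : I -> set Omega) (P : I -> \bar R)
  (Y : Omega -> R) :
  (exists w : Omega, True) ->
  (forall i, B i !=set0) ->
  coherent1 X B P ->
  exists a b : \bar R, (a <= b)%E /\
    forall p : \bar R,
      coherent1 (extX X Y) (extB B) (extP P p) <-> (a <= p <= b)%E.
Proof.
move=> _ _ H.
exact: (@mainI R Omega {classic I} X B P Y H).
Qed.
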